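(* Let $\Gamma$ be a finite connected graph and let $\Sigma$ be a motif in $\Gamma$ with vertices $p_1,\dots,p_m$. Suppose that $1$ is an eigenvalue of the normalized Laplacian of the graph $\Sigma$, with eigenfunction $f^\Sigma$. Let $\Gamma^\Sigma$ be the graph obtained from $\Gamma$ by adding new vertices $q_1,\dots,q_m$, joining $q_\alpha$ and $q_\beta$ by an edge whenever $p_\alpha\sim p_\beta$, and joining each $q_\alpha$ by an edge to every vertex $p\notin\Sigma$ that is a neighbor of $p_\alpha$ in $\Gamma$. Then $1$ is an eigenvalue of the normalized Laplacian of $\Gamma^\Sigma$, with an eigenfunction that vanishes at every vertex other than $p_1,\dots,p_m,q_1,\dots,q_m$.
   Context: For a finite simple graph without isolated vertices, write $i\sim j$ for adjacency and $n_i$ for the degree of $i$. The normalized Laplacian acts on real functions $v$ on the vertices by $\Delta v(i)=v(i)-\frac{1}{n_i}\sum_{j\sim i}v(j)$; $\lambda$ is an eigenvalue with eigenfunction $u$ if $u\not\equiv 0$ and $\frac{1}{n_i}\sum_{j\sim i}u(j)=(1-\lambda)u(i)$ for all $i$. A motif in $\Gamma$ is a connected subgraph $\Sigma$ of $\Gamma$ containing all edges of $\Gamma$ between its vertices (i.e. a connected induced subgraph). *)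

(* Defs.v *)
From mathcomp Require Import all_boot all_order all_algebra.
Set Implicit Arguments. Unset Strict Implicit. Unset Printing Implicit Defensive.
Import Order.TTheory GRing.Theory Num.Theory.
Local Open Scope ring_scope.

(* A (finite simple) graph is given by a vertex set A : {set V} of a finType V
   together with an adjacency relation adj : rel V; the graph is the one
   induced by adj on A. *)
Definition simple_rel (V : finType) (adj : rel V) : Prop :=
  (forall x y, adj x y = adj y x) /\ (forall x, ~~ adj x x).

Definition deg (V : finType) (A : {set V}) (adj : rel V) (i : V) : nat :=
  #|[set j in A | adj i j]|.

Definition no_isolated (V : finType) (A : {set V}) (adj : rel V) : Prop :=
  forall i, i \in A -> exists2 j, j \in A & adj i j.

Definition restr (V : finType) (A : {set V}) (adj : rel V) : rel V :=
  fun x y => [&& x \in A, y \in A & adj x y].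

Definition connected_graph (V : finType) (A : {set V}) (adj : rel V) : Prop :=
  forall x y, x \in A -> y \in A -> connect (restr A adj) x y.

Definition nl_eigenfunction (R : realFieldType) (V : finType) (A : {set V})
    (adj : rel V) (lam : R) (u : V -> R) : Prop :=
  (exists2 i, i \in A & u i != 0) /\
  (forall i, i \in A ->
     (deg A adj i)%:R^-1 * (\sum_(j in A | adj i j) u j) = (1 - lam) * u i).

(* The graph Gamma^Sigma, on vertex type T + T: inl p are the old vertices of
   Gamma (all of T), inr q for q in S is the new vertex q_alpha copying p_alpha = q. *)
Definition ext_vertices (T : finType) (S : {set T}) : {set T + T} :=
  [set x | match x with inl _ => true | inr q => q \in S end].

Definition ext_adj (T : finType) (e : rel T) (S : {set T}) : rel (T + T) :=
  fun x y =>
    match x, y with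
    | inl a, inl b => e a b
    | inr a, inr b => [&& a \in S, b \in S & e a b]
    | inl p, inr q => [&& q \in S, p \notin S & e p q]
    | inr q, inl p => [&& q \in S, p \notin S & e p q]
    end.

(* Main.v *)
Require Import Defs.
From mathcomp Require Import all_boot all_order all_algebra.
Import Order.TTheory GRing.Theory Num.Theory.
Local Open Scope ring_scope.

Theorem theorem1 (R : realFieldType) (T : finType) (e : rel T) (S : {set T})
    (f : T -> R) :
  simple_rel e ->
  connected_graph [set: T] e ->
  (* Sigma is a motif: connected induced subgraph on S *)
  connected_graph S e ->
  (* the normalized Laplacian of Sigma is defined *)
  no_isolated S e ->
  nl_eigenfunction S e 1 f ->
  exists u : T + T -> R,
    nl_eigenfunction (ext_vertices S) (ext_adj e S) 1 u /\
    (forall x, x \in ext_vertices S ->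
       x \notin [set inl p | p in S] :|: [set inr q | q in S] -> u x = 0).
Proof.
move=> _ _ _ noiso [[i0 i0S fi0] hf].
have fsum : forall p, p \in S -> \sum_(j in S | e p j) f j = 0.
  move=> p pS; have := hf p pS; rewrite subrr mul0r => /eqP.
  rewrite mulf_eq0 invr_eq0 pnatr_eq0 => /orP [|/eqP //].
  case: (noiso p pS) => j jS epj /eqP/cards0_eq /setP /(_ j).
  by rewrite !inE jS epj.
pose u (x : T + T) : R := match x with
  | inl p => if p \in S then f p else 0
  | inr q => if q \in S then - f q else 0 end.
exists u; split; last first.
  case=> [p|q] _ H; rewrite /u; case: ifP => // pS; exfalso; move/negP: H; apply;
    rewrite inE; apply/orP; [left|right]; exact: imset_f.
split.
  by exists (inl i0); rewrite /u ?inE // i0S.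
move=> x xA; rewrite subrr mul0r.
suff -> : \sum_(j in ext_vertices S | ext_adj e S x j) u j = 0 by rewrite mulr0.
rewrite big_sumType /=.
case: x xA => [p|q] xA.
- have L : \sum_(i | (inl i \in ext_vertices S) && ext_adj e S (inl p) (inl i)) u (inl i)
        = \sum_(i in S | e p i) f i.
    rewrite big_mkcond [RHS]big_mkcond /=; apply: eq_bigr => i _; rewrite inE /=.
    by case: (i \in S); case: (e p i).
  rewrite L.
  case: (boolP (p \in S)) => pS.
    rewrite fsum // add0r; apply: big1 => i; rewrite inE /= pS /=.
    by rewrite !andbF.
  have Rr : \sum_(i | (inr i \in ext_vertices S) && ext_adj e S (inl p) (inr i)) u (inr i)
        = \sum_(i in S | e p i) - f i.
    rewrite big_mkcond [RHS]big_mkcond /=; apply: eq_bigr => i _; rewrite inE /= (negbTE pS) /=.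
    by case: (i \in S); case: (e p i).
  by rewrite Rr sumrN subrr.
- have qS : q \in S by move: xA; rewrite inE.
  rewrite big1 ?add0r; last first.
    by move=> i; rewrite /= => /andP [_ /and3P [_ /negbTE -> _]].
  have Rr : \sum_(i | (inr i \in ext_vertices S) && ext_adj e S (inr q) (inr i)) u (inr i)
        = \sum_(i in S | e q i) - f i.
    rewrite big_mkcond [RHS]big_mkcond /=; apply: eq_bigr => i _; rewrite inE /= qS /=.
    by case: (i \in S); case: (e q i).
  by rewrite Rr sumrN fsum // oppr0.
Qed.
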